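(* Let $\Delta,\Delta'$ be disjoint subsets of a finite alphabet $\Sigma$, and let $L\subseteq\Sigma^\omega$ be an aperiodic language such that each string in $L$ contains exactly one occurrence of a symbol from $\Delta$ and exactly one occurrence of a symbol from $\Delta'$. Then $L$ can be written as a finite union of disjoint languages $R_\ell\, a\, R_m\, b\, R_r$ where $(a,b)\in(\Delta\times\Delta')\cup(\Delta'\times\Delta)$, $R_\ell,R_m\subseteq(\Sigma\setminus(\Delta\cup\Delta'))^*$ and $R_r\subseteq(\Sigma\setminus(\Delta\cup\Delta'))^\omega$. Moreover $R_\ell$, $R_m$ and $R_r$ are aperiodic.
   Context: A finite monoid $M$ is aperiodic if there is $n$ with $x^n=x^{n+1}$ for all $x\in M$. A language $K\subseteq\Sigma^*$ is aperiodic if it is recognized by a morphism $h:\Sigma^*\to M$ to a finite aperiodic monoid (i.e. $K=h^{-1}(h(K))$). For $\omega$-languages: given a morphism $h:\Sigma^*\to M$ to a finite monoid, $\omega$-strings $u,v$ are $h$-similar if they factor as $u=u_1u_2\cdots$, $v=v_1v_2\cdots$ with $u_i,v_i\in\Sigma^+$ and $h(u_i)=h(v_i)$; let $\cong$ be its transitive closure; $h$ recognizes $L\subseteq\Sigma^\omega$ if $w\in L$ and $u\cong w$ imply $u\in L$; $L$ is aperiodic if recognized by a morphism to a finite aperiodic monoid. *)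

(* Defs.v *)
From Stdlib Require Import Relations.
From mathcomp Require Import all_boot.
Set Implicit Arguments. Unset Strict Implicit. Unset Printing Implicit Defensive.

Section Defs.
Variable Sigma : finType.

Definition is_monoid (M : Type) (op : M -> M -> M) (e : M) : Prop :=
  associative op /\ left_id e op /\ right_id e op.

Definition mpow (M : Type) (op : M -> M -> M) (e : M) (x : M) (n : nat) : M :=
  iter n (op x) e.

Definition aperiodic_monoid (M : Type) (op : M -> M -> M) (e : M) : Prop :=
  exists n : nat, forall x : M, mpow op e x n = mpow op e x n.+1.

Definition is_morphism (M : Type) (op : M -> M -> M) (e : M)
  (h : seq Sigma -> M) : Prop :=
  h [::] = e /\ forall u v, h (u ++ v) = op (h u) (h v).

Definition recognizes (M : Type) (h : seq Sigma -> M) (K : seq Sigma -> Prop) : Prop :=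
  forall v, K v <-> exists u, K u /\ h u = h v.

Definition aperiodic_lang (K : seq Sigma -> Prop) : Prop :=
  exists (M : finType) (op : M -> M -> M) (e : M) (h : seq Sigma -> M),
    [/\ is_monoid op e, aperiodic_monoid op e, is_morphism op e h & recognizes h K].

Definition factor (u : nat -> Sigma) (p : nat -> nat) (i : nat) : seq Sigma :=
  mkseq (fun k => u (p i + k)) (p i.+1 - p i).

(* u and v are h-similar: u = u_1 u_2 ..., v = v_1 v_2 ... with u_i, v_i
   nonempty and h(u_i) = h(v_i); factorizations given by strictly increasing
   cut points starting at 0 *)
Definition h_similar (M : Type) (h : seq Sigma -> M) (u v : nat -> Sigma) : Prop :=
  exists p q : nat -> nat,
    [/\ p 0 = 0, q 0 = 0, (forall i, p i < p i.+1), (forall i, q i < q i.+1)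
      & forall i, h (factor u p i) = h (factor v q i)].

Definition h_cong (M : Type) (h : seq Sigma -> M) : relation (nat -> Sigma) :=
  clos_trans _ (h_similar h).

Definition recognizes_omega (M : Type) (h : seq Sigma -> M)
  (L : (nat -> Sigma) -> Prop) : Prop :=
  forall w u, L w -> h_cong h u w -> L u.

Definition aperiodic_omega_lang (L : (nat -> Sigma) -> Prop) : Prop :=
  exists (M : finType) (op : M -> M -> M) (e : M) (h : seq Sigma -> M),
    [/\ is_monoid op e, aperiodic_monoid op e, is_morphism op e h
      & recognizes_omega h L].

Definition prepend (x : seq Sigma) (y : nat -> Sigma) : nat -> Sigma :=
  fun n => if n < size x then nth (y 0) x n else y (n - size x).

Definition concat5 (Rl : seq Sigma -> Prop) (a : Sigma) (Rm : seq Sigma -> Prop)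
  (b : Sigma) (Rr : (nat -> Sigma) -> Prop) : (nat -> Sigma) -> Prop :=
  fun w => exists x y z, [/\ Rl x, Rm y, Rr z &
                           forall n, w n = prepend (x ++ a :: y ++ [:: b]) z n].

End Defs.

(* Main.v *)
Require Import Defs.
From mathcomp Require Import all_boot zify.
From Stdlib Require Import Relations FunctionalExtensionality.
Set Implicit Arguments. Unset Strict Implicit. Unset Printing Implicit Defensive.

Section Aux.
Variable Sigma : finType.
Implicit Types (u x y : seq Sigma) (z w : nat -> Sigma).

Lemma prepend_lt u z n : n < size u -> prepend u z n = nth (z 0) u n.
Proof. by rewrite /prepend => ->. Qed.
Lemma prepend_ge u z n : size u <= n -> prepend u z n = z (n - size u).
Proof. by rewrite /prepend ltnNge => ->. Qed.
Lemma prepend_add u z m : prepend u z (size u + m) = z m.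
Proof. by rewrite prepend_ge ?leq_addr // addKn. Qed.

Lemma mkseq_prepend u z m : mkseq (prepend u z) (size u + m) = u ++ mkseq z m.
Proof.
apply: (@eq_from_nth _ (z 0)); first by rewrite size_cat !size_mkseq.
move=> i; rewrite size_mkseq => Hi; rewrite nth_mkseq // nth_cat.
case: ltnP => H; first by rewrite prepend_lt.
rewrite prepend_ge // nth_mkseq //; lia.
Qed.

Lemma mkseq_prepend_le u z n : n <= size u -> mkseq (prepend u z) n = take n u.
Proof.
move=> Hn; apply: (@eq_from_nth _ (z 0)); first by rewrite size_mkseq size_takel.
move=> i; rewrite size_mkseq => Hi; rewrite nth_mkseq // nth_take // prepend_lt //; lia.
Qed.

Lemma nth_U d x a y b n : nth d (x ++ a :: y ++ [:: b]) n =
  if n < size x then nth d x n else if n == size x then a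
  else if n < size x + 1 + size y then nth d y (n - (size x).+1)
  else if n == size x + 1 + size y then b else d.
Proof.
rewrite nth_cat; case: ltnP => h1 //.
case: eqP => h2; first by rewrite h2 subnn.
have -> : n - size x = (n - (size x).+1).+1 by lia.
rewrite /= nth_cat; case: ltnP => h3; first by (have -> : n < size x + 1 + size y by lia).
have -> : (n < size x + 1 + size y) = false by lia.
case: eqP => h4.
  by have -> : n - (size x).+1 - size y = 0 by lia.
have -> : n - (size x).+1 - size y = (n - (size x).+1 - size y - 1).+1 by lia.
by rewrite /= nth_nil.
Qed.

Lemma ex_interval (p : nat -> nat) : p 0 = 0 -> (forall i, p i < p i.+1) ->
  forall k, exists i, p i <= k < p i.+1.
Proof.
move=> p0 pi; elim=> [|k [i /andP [h1 h2]]]; first by exists 0; rewrite p0 leqnn; have := pi 0; rewrite p0.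
case: (ltnP k.+1 (p i.+1)) => h3; first by exists i; rewrite h3 andbT; lia.
exists i.+1; have := pi i.+1; lia.
Qed.

Section Morph.
Variables (M : Type) (op : M -> M -> M) (e : M) (h : seq Sigma -> M).
Hypothesis Hm : is_morphism op e h.

Lemma prepend_similar u u' z z' : h u = h u' -> h_similar h z z' ->
  h_similar h (prepend u z) (prepend u' z').
Proof.
move=> Hu [p [q [p0 q0 pi qi Hf]]].
exists (fun i => if i is i'.+1 then size u + p i'.+1 else 0),
       (fun i => if i is i'.+1 then size u' + q i'.+1 else 0).
split => //.
- case => [|i] /=; first by have := pi 0; rewrite p0; lia.
  by have := pi i.+1; lia.
- case => [|i] /=; first by have := qi 0; rewrite q0; lia.
  by have := qi i.+1; lia.
case => [|i]; rewrite /factor /=.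
  have E : forall f n, mkseq (fun k => f (0 + k)) n = mkseq f n :> seq Sigma by [].
  rewrite !subn0 !E !mkseq_prepend !Hm.2 Hu.
  have := Hf 0; rewrite /factor p0 q0 !subn0 !E => ->. done.
rewrite !subnDl.
have E : forall v (r : nat -> nat) (y : nat -> Sigma) n,
  mkseq (fun k => prepend v y (size v + r i.+1 + k)) n = mkseq (fun k => y (r i.+1 + k)) n.
  by move=> v r y n; apply: eq_mkseq => k; rewrite -addnA prepend_add.
by rewrite !E; apply: Hf.
Qed.

Lemma similar_refl z : h_similar h z z.
Proof. by exists id, id; split. Qed.
End Morph.
End Aux.
Section Prod.
Variable Sigma : finType.
Variables (M : finType) (op : M -> M -> M) (e : M) (h : seq Sigma -> M).
Hypotheses (Hmon : is_monoid op e) (Hap : aperiodic_monoid op e) (Hm : is_morphism op e h).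
Variable G : pred Sigma.
Definition opb (x y : M * bool) := (op x.1 y.1, x.2 && y.2).
Definition hb u := (h u, all G u).

Lemma prod_monoid : is_monoid opb (e, true).
Proof.
case: Hmon => [A [Li Ri]]; split; last split.
- by move=> [x c] [y d] [z f]; rewrite /opb /= A andbA.
- by move=> [x c]; rewrite /opb /= Li.
- by move=> [x c]; rewrite /opb /= Ri andbT.
Qed.

Lemma mpow_prod x c k : mpow opb (e, true) (x, c) k = (mpow op e x k, (k == 0) || c).
Proof.
elim: k => [|k IH] //.
change (opb (x, c) (mpow opb (e, true) (x, c) k) = (op x (mpow op e x k), c)).
rewrite IH /opb /=; clear IH; by case: c; rewrite ?andbT ?orbT.
Qed.

Lemma prod_aper : aperiodic_monoid opb (e, true).
Proof.
case: Hap => n Hn; exists n.+1 => [[x c]]; rewrite !mpow_prod /=; congr (_, _).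
change (op x (mpow op e x n) = op x (mpow op e x n.+1)).
by rewrite -Hn.
Qed.

Lemma prod_morph : is_morphism opb (e, true) hb.
Proof. by split; [rewrite /hb Hm.1 | move=> u v; rewrite /hb /opb Hm.2 all_cat]. Qed.

Lemma lang_aper (s : M) : aperiodic_lang (fun x => all G x /\ h x = s).
Proof.
exists (M * bool)%type, opb, (e, true), hb; split.
- exact: prod_monoid.
- exact: prod_aper.
- exact: prod_morph.
move=> v; split; first by move=> H; exists v.
by move=> [u [[Gu hu] E]]; case: E => E1 E2; split; [rewrite -E2 | rewrite -E1].
Qed.

Lemma omega_aper (Q : (nat -> Sigma) -> Prop) :
  (forall z z', h_similar h z z' -> Q z' -> Q z) ->
  aperiodic_omega_lang (fun z => (forall k, G (z k)) /\ Q z).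
Proof.
move=> HQ; exists (M * bool)%type, opb, (e, true), hb; split.
- exact: prod_monoid.
- exact: prod_aper.
- exact: prod_morph.
move=> w u Hw Hc; elim: Hc Hw => [u' w' Hs | u' y' w' _ IH1 _ IH2] Hw; last by apply: IH1; apply: IH2.
case: Hs => [p [q [p0 q0 pi qi Hf]]]; case: Hw => [Gw Qw]; split.
  move=> k; have [i /andP [h1 h2]] := ex_interval p0 pi k.
  have : all G (factor u' p i).
    have := Hf i; rewrite /hb => -[_ ->].
    by apply/allP => c /mapP [j _ ->].
  move/allP; apply; apply/mapP; exists (k - p i); last by rewrite subnKC.
  by rewrite mem_iota /=; lia.
apply: HQ Qw; exists p, q; split => // i.
by have := Hf i; rewrite /hb => -[].
Qed.
End Prod.


Section Decomp.
Variable Sigma : finType.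
Variable G : pred Sigma.
Implicit Types (x y : seq Sigma) (z : nat -> Sigma).

Lemma notG_pos x a y b z n : all G x -> all G y -> (forall k, G (z k)) ->
  ~~ G (prepend (x ++ a :: y ++ [:: b]) z n) -> n = size x \/ n = size x + 1 + size y.
Proof.
move=> Gx Gy Gz; case: (ltnP n (size (x ++ a :: y ++ [:: b]))) => H; last first.
  by rewrite prepend_ge // Gz.
rewrite prepend_lt // nth_U.
case: ltnP => h1; first by rewrite (allP Gx) // mem_nth.
case: eqP => h2; first by left. move/eqP in h2.
case: ltnP => h3. have hh : n - (size x).+1 < size y by lia. by rewrite (allP Gy) // mem_nth.
case: eqP => h4; first by right. move/eqP in h4.
move: H; rewrite size_cat /= size_cat /=; lia.
Qed.

Lemma prepend_a x a y b z : prepend (x ++ a :: y ++ [:: b]) z (size x) = a.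
Proof. by rewrite prepend_lt ?nth_U ?ltnn ?eqxx // size_cat /=; lia. Qed.

Lemma prepend_b x a y b z : prepend (x ++ a :: y ++ [:: b]) z (size x + 1 + size y) = b.
Proof.
rewrite prepend_lt ?nth_U; last by rewrite size_cat /= size_cat /=; lia.
have -> : (size x + 1 + size y < size x) = false by lia.
have -> : (size x + 1 + size y == size x) = false by lia.
by rewrite ltnn eqxx.
Qed.

Lemma decomp_unique x a y b z x' a' y' b' z' :
  all G x -> all G y -> (forall k, G (z k)) ->
  all G x' -> all G y' -> (forall k, G (z' k)) ->
  ~~ G a -> ~~ G b -> ~~ G a' -> ~~ G b' ->
  (forall n, prepend (x ++ a :: y ++ [:: b]) z n = prepend (x' ++ a' :: y' ++ [:: b']) z' n) ->
  [/\ x = x', a = a', y = y' & b = b'].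
Proof.
move=> Gx Gy Gz Gx' Gy' Gz' Ga Gb Ga' Gb' E.
have P1 := notG_pos (a:=a') (b:=b') Gx' Gy' Gz' (n := size x); rewrite -E prepend_a in P1.
have P2 := notG_pos (a:=a) (b:=b) Gx Gy Gz (n := size x'); rewrite E prepend_a in P2.
have P3 := notG_pos (a:=a') (b:=b') Gx' Gy' Gz' (n := size x + 1 + size y); rewrite -E prepend_b in P3.
have P4 := notG_pos (a:=a) (b:=b) Gx Gy Gz (n := size x' + 1 + size y'); rewrite E prepend_b in P4.
have Sx : size x = size x' by case: (P1 Ga); case: (P2 Ga'); lia.
have Sy : size y = size y' by case: (P3 Gb); case: (P4 Gb'); lia.
have EU : x ++ a :: y ++ [:: b] = x' ++ a' :: y' ++ [:: b'].
  have S : size (x ++ a :: y ++ [:: b]) = size (x' ++ a' :: y' ++ [:: b']).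
    by rewrite !size_cat /= !size_cat Sx Sy.
  rewrite -(take_size (x ++ _)) -(take_size (x' ++ _)).
  rewrite -(mkseq_prepend_le z (leqnn _)) -(mkseq_prepend_le z' (leqnn _)) -S.
  exact: eq_mkseq.
move/eqP: EU; rewrite eqseq_cat // => /andP [/eqP -> /eqP [-> ]].
by rewrite !cats1 => /rcons_inj [-> ->].
Qed.
End Decomp.

Lemma build_decomp (Sigma : finType) (G : pred Sigma) (w : nat -> Sigma) p q :
  p < q -> (forall n, n != p -> n != q -> G (w n)) ->
  [/\ all G (mkseq w p), all G (mkseq (fun k => w (p.+1 + k)) (q - p.+1)),
      forall k, G (w (q.+1 + k)) &
      forall n, w n = prepend (mkseq w p ++ w p :: mkseq (fun k => w (p.+1 + k)) (q - p.+1) ++ [:: w q])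
                        (fun k => w (q.+1 + k)) n].
Proof.
move=> pq HG; split.
- apply/allP => c /mapP [k]; rewrite mem_iota /= => Hk ->; apply: HG; lia.
- apply/allP => c /mapP [k]; rewrite mem_iota /= => Hk ->; apply: HG; lia.
- move=> k; apply: HG; lia.
move=> n; set U := (X in prepend X).
have SU : size U = q.+1 by rewrite /U size_cat /= size_cat !size_mkseq /=; lia.
case: (ltnP n (size U)) => H; last first.
  by rewrite prepend_ge // SU; congr w; lia.
rewrite prepend_lt // /U nth_U !size_mkseq.
case: ltnP => h1; first by rewrite nth_mkseq.
case: eqP => h2; first by rewrite h2.
move/eqP in h2.
case: ltnP => h3; first by rewrite nth_mkseq; [congr w | ]; lia.
case: eqP => h4; first by congr w; lia.
move/eqP in h4; lia.
Qed.

Lemma quad_eq (M : Type) (Sigma : Type) (t t' : M * Sigma * M * Sigma) :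
  t.1.1.1 = t'.1.1.1 -> t.1.1.2 = t'.1.1.2 -> t.1.2 = t'.1.2 -> t.2 = t'.2 -> t = t'.
Proof. by case: t => [[[? ?] ?] ?]; case: t' => [[[? ?] ?] ?] /= -> -> -> ->. Qed.

Lemma h_cons (Sigma : finType) (M : Type) (op : M -> M -> M) e (h : seq Sigma -> M) :
  is_morphism op e h -> forall x a y, h (x ++ a :: y) = op (h x) (op (h [:: a]) (h y)).
Proof. by move=> Hm x a y; rewrite -cat1s !Hm.2. Qed.

Theorem mainTheorem7 (Sigma : finType) (D D' : {set Sigma})
  (L : (nat -> Sigma) -> Prop) :
  [disjoint D & D'] ->
  aperiodic_omega_lang L ->
  (forall w, L w -> (exists! i, w i \in D) /\ (exists! i, w i \in D')) ->
  exists (n : nat) (Rl Rm : 'I_n -> seq Sigma -> Prop) (a b : 'I_n -> Sigma)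
         (Rr : 'I_n -> (nat -> Sigma) -> Prop),
    [/\ (forall j, (a j \in D /\ b j \in D') \/ (a j \in D' /\ b j \in D))
        /\ (forall j x, Rl j x -> all (fun c => c \notin D :|: D') x),
        (forall j x, Rm j x -> all (fun c => c \notin D :|: D') x)
        /\ (forall j z, Rr j z -> forall k, z k \notin D :|: D'),
        forall j, [/\ aperiodic_lang (Rl j), aperiodic_lang (Rm j)
                    & aperiodic_omega_lang (Rr j)],
        forall j k w, j != k ->
          concat5 (Rl j) (a j) (Rm j) (b j) (Rr j) w ->
          ~ concat5 (Rl k) (a k) (Rm k) (b k) (Rr k) w
      & forall w, L w <-> exists j, concat5 (Rl j) (a j) (Rm j) (b j) (Rr j) w].
Proof.
move=> Hdis [M [op [e [h [Hmon Hap Hm Hrec]]]]] Huniq.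
pose G : pred Sigma := fun c => c \notin D :|: D'.
pose good := fun t : M * Sigma * M * Sigma =>
  ((t.1.1.2 \in D) && (t.2 \in D')) || ((t.1.1.2 \in D') && (t.2 \in D)).
pose T : finType := {t : M * Sigma * M * Sigma | good t}.
pose tup := fun j : 'I_#|T| => val (enum_val j).
have goodj : forall j, good (tup j) by move=> j; exact: (valP (enum_val j)).
have notGa : forall j, ~~ G (tup j).1.1.2 /\ ~~ G (tup j).2.
  move=> j; have := goodj j; rewrite /good /G !in_setU !negbK.
  by case/orP => /andP [-> ->]; rewrite ?orbT.
pose Q := fun j (z : nat -> Sigma) => exists x y, h x = (tup j).1.1.1 /\ h y = (tup j).1.2 /\
   L (prepend (x ++ (tup j).1.1.2 :: y ++ [:: (tup j).2]) z).
have hU : forall x a y b, h (x ++ a :: y ++ [:: b]) = op (h x) (op (h [:: a]) (op (h y) (h [:: b]))).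
  by move=> x a y b; rewrite (h_cons Hm) Hm.2.
exists #|T|, (fun j x => all G x /\ h x = (tup j).1.1.1), (fun j y => all G y /\ h y = (tup j).1.2),
  (fun j => (tup j).1.1.2), (fun j => (tup j).2),
  (fun j z => (forall k, G (z k)) /\ Q j z).
split.
- split; last by move=> j x [].
  move=> j; have := goodj j; rewrite /good.
  by case/orP => /andP [-> ->]; [left | right].
- by split; [move=> j x [] | move=> j z []].
- move=> j /=; split; [exact: (lang_aper Hmon Hap Hm) | exact: (lang_aper Hmon Hap Hm) | ].
  apply: (omega_aper Hmon Hap Hm) => z z' Hs [x [y [hx [hy Lz]]]].
  exists x, y; split => //; split => //.
  apply: Hrec Lz _; apply: t_step; by apply: (prepend_similar Hm) Hs.
- move=> j k w Hjk [x [y [z [[Gx hx] [Gy hy] [Gz _] Ew]]]] [x' [y' [z' [[Gx' hx'] [Gy' hy'] [Gz' _] Ew']]]].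
  have [Ga Gb] := notGa j; have [Ga' Gb'] := notGa k.
  have [ex ea ey eb] := decomp_unique Gx Gy Gz Gx' Gy' Gz' Ga Gb Ga' Gb' (fun n => etrans (esym (Ew n)) (Ew' n)).
  move/eqP: Hjk; apply; apply: enum_val_inj; apply: val_inj.
  by apply: quad_eq => //; rewrite -?hx -?hx' -?hy -?hy' ?ex ?ey.
move=> w; split.
- move=> Lw; have [[i [Di Ui]] [i' [Di' Ui']]] := Huniq w Lw.
  have Hoth : forall n, n != i -> n != i' -> G (w n).
    move=> n h1 h2; rewrite /G in_setU negb_or; apply/andP; split; apply/negP.
      by move=> /Ui E; rewrite E eqxx in h1.
    by move=> /Ui' E; rewrite E eqxx in h2.
  have key : forall p q, p < q -> (forall n, n != p -> n != q -> G (w n)) ->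
     good (((h (mkseq w p), w p), h (mkseq (fun k => w (p.+1 + k)) (q - p.+1))), w q) ->
     exists j, concat5 (fun x => all G x /\ h x = (tup j).1.1.1) ((tup j).1.1.2)
        (fun y => all G y /\ h y = (tup j).1.2) ((tup j).2) (fun z => (forall k, G (z k)) /\ Q j z) w.
    move=> p q pq HG Hg.
    have [Gx Gy Gz Ew] := build_decomp pq HG.
    exists (enum_rank (exist (fun t => is_true (good t)) _ Hg : T)).
    have Ej : tup (enum_rank (exist (fun t => is_true (good t)) _ Hg : T)) = (((h (mkseq w p), w p), h (mkseq (fun k => w (p.+1 + k)) (q - p.+1))), w q).
      by rewrite /tup enum_rankK.
    rewrite /Q Ej /=.
    do 3 eexists; split; [split; [exact: Gx | reflexivity] | split; [exact: Gy | reflexivity] | | exact: Ew].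
    split => //; do 2 eexists; split; [reflexivity | split; [reflexivity | ]].
    by rewrite -(functional_extensionality _ _ Ew).
  have Hne : i != i'.
    apply/eqP => E; move: Di'; rewrite -E (disjointFr Hdis Di) //.
  case: (ltngtP i i') => H; last by rewrite H eqxx in Hne.
  + apply: (key i i' H); first by move=> n h1 h2; apply: Hoth.
    by rewrite /good /= Di Di'.
  + apply: (key i' i H); first by move=> n h1 h2; exact: Hoth h2 h1.
    by rewrite /good /= Di Di' orbT.
- move=> [j [x [y [z [[Gx hx] [Gy hy] [Gz [x' [y' [hx' [hy' Lz]]]]] Ew]]]]].
  rewrite (functional_extensionality _ _ Ew).
  apply: Hrec Lz _; apply: t_step; apply: (prepend_similar Hm) (similar_refl _ _).
  by rewrite !hU hx hy hx' hy'.
Qed.
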